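(* Let $f(x,y)=(x,y)$ be the identity function. Any protocol with a fixed order of speaking that computes $f$ over a feedback channel succeeds with probability at most $1/2$ when $1/4$ of the transmissions are corrupted; that is, there are inputs and an adversarial corruption pattern corrupting at most a $1/4$-fraction of the transmissions under which the protocol outputs the correct value with probability at most $1/2$.
   Context: Alice holds $x$ and Bob holds $y$; in each round exactly one party sends one symbol over the channel, and both parties must output $f(x,y)$. A feedback channel is a channel $\Sigma\to\Sigma$ (for some alphabet $\Sigma$) in which the adversary may change any transmitted symbol into any other symbol, and the sender learns, via a noiseless feedback, the (possibly corrupted) symbol received by the other party. A protocol has a fixed order of speaking if there is a function $g:\mathbb{N}\to\{\text{Alice},\text{Bob}\}$ such that the speaker at round $i$ is $g(i)$, independent of inputs and noise; the protocol runs a fixed number of rounds. *)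

(* Defs.v *)
From mathcomp Require Import all_boot all_order all_algebra.
Set Implicit Arguments. Unset Strict Implicit. Unset Printing Implicit Defensive.
Import Order.TTheory GRing.Theory Num.Theory.

(* Thanks to the noiseless feedback, both
   parties know the sequence of *received* symbols (the transcript); each
   party's message in round i is a function of its input, its private
   randomness and the received transcript of the first i rounds.  The order
   of speaking [speaker] depends only on the round number (true = Alice). *)
Record protocol (X Y S RA RB : Type) := Protocol {
  rounds  : nat;
  speaker : nat -> bool;
  msgA    : X -> RA -> seq S -> S;
  msgB    : Y -> RB -> seq S -> S;
  outA    : X -> RA -> seq S -> X * Y;
  outB    : Y -> RB -> seq S -> X * Y }.

(* An adaptive adversary: given the received transcript so far and the symbol
   actually sent in the current round, it chooses the symbol delivered. *)
Definition adversary (S : Type) := seq S -> S -> S.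

Section Run.
Variables (X Y : Type) (S : eqType) (RA RB : Type).
Variables (P : protocol X Y S RA RB) (adv : adversary S).
Variables (x : X) (y : Y) (rA : RA) (rB : RB).

Definition sent (i : nat) (h : seq S) : S :=
  if speaker P i then msgA P x rA h else msgB P y rB h.

Fixpoint transcript (i : nat) : seq S :=
  if i is i'.+1 then
    let h := transcript i' in rcons h (adv h (sent i' h))
  else [::].

Definition corruptions : nat :=
  \sum_(i < rounds P)
    (adv (transcript i) (sent i (transcript i)) != sent i (transcript i)).

End Run.

Definition succeeds (X Y : eqType) (S : eqType) (RA RB : Type)
  (P : protocol X Y S RA RB) (adv : adversary S)
  (x : X) (y : Y) (rA : RA) (rB : RB) : bool :=
  (outA P x rA (transcript P adv x y rA rB (rounds P)) == (x, y)) &&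
  (outB P y rB (transcript P adv x y rA rB (rounds P)) == (x, y)).

(* Main.v *)
Require Import Defs.
From mathcomp Require Import all_boot all_order all_algebra.
From mathcomp Require Import ring lra zify.
Import Order.TTheory GRing.Theory Num.Theory.
Set Implicit Arguments. Unset Strict Implicit. Unset Printing Implicit Defensive.

Section Bob.
Variables (X Y : Type) (S : eqType) (RA RB : Type) (P : protocol X Y S RA RB).

Definition cntB i := (\sum_(j < i) ~~ speaker P j)%N.
Definition firstB m i := (cntB i < m)%N.

Fixpoint Tg x rA y0 u y1 v m i : seq S :=
  if i is i'.+1 then
    let h := Tg x rA y0 u y1 v m i' in
    rcons h (if speaker P i' then msgA P x rA h
             else if firstB m i' then msgB P y0 u h else msgB P y1 v h)
  else [::].

Definition adv0 m y1 v : adversary S := fun h s =>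
  if ~~ speaker P (size h) && ~~ firstB m (size h) then msgB P y1 v h else s.
Definition adv1 m y0 u : adversary S := fun h s =>
  if ~~ speaker P (size h) && firstB m (size h) then msgB P y0 u h else s.

Lemma size_Tg x rA y0 u y1 v m i : size (Tg x rA y0 u y1 v m i) = i.
Proof. by elim: i => //= i IH; rewrite size_rcons IH. Qed.

Lemma size_tr adv x y rA rB i : size (transcript P adv x y rA rB i) = i.
Proof. by elim: i => //= i IH; rewrite size_rcons IH. Qed.

Lemma T0 x rA y0 u y1 v m i :
  transcript P (adv0 m y1 v) x y0 rA u i = Tg x rA y0 u y1 v m i.
Proof.
elim: i => //= i ->; rewrite /adv0 /sent size_Tg.
by case: (speaker P i); case: (firstB m i).
Qed.

Lemma T1 x rA y0 u y1 v m i :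
  transcript P (adv1 m y0 u) x y1 rA v i = Tg x rA y0 u y1 v m i.
Proof.
elim: i => //= i ->; rewrite /adv1 /sent size_Tg.
by case: (speaker P i); case: (firstB m i).
Qed.

Lemma cnt_first m n :
  (\sum_(i < n) (~~ speaker P i && firstB m i) = minn m (cntB n))%N.
Proof.
elim: n => [|n IH]; first by rewrite /cntB !big_ord0 minn0.
rewrite big_ord_recr /= IH /cntB big_ord_recr /= -/(cntB n) /firstB.
case: (speaker P n); case: ltnP => H /=; lia.
Qed.

Lemma cnt_split m n :
  (\sum_(i < n) (~~ speaker P i && firstB m i) +
   \sum_(i < n) (~~ speaker P i && ~~ firstB m i) = cntB n)%N.
Proof.
rewrite -big_split /=; apply: eq_bigr => i _.
by case: (speaker P i); case: (firstB m i).
Qed.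

Lemma corr0 x rA y0 u y1 v m :
  (corruptions P (adv0 m y1 v) x y0 rA u <=
   \sum_(i < rounds P) (~~ speaker P i && ~~ firstB m i))%N.
Proof.
apply: leq_sum => i _; rewrite /adv0 size_tr.
by case: ifP => _; rewrite ?eqxx ?leq_b1.
Qed.

Lemma corr1 x rA y0 u y1 v m :
  (corruptions P (adv1 m y0 u) x y1 rA v <=
   \sum_(i < rounds P) (~~ speaker P i && firstB m i))%N.
Proof.
apply: leq_sum => i _; rewrite /adv1 size_tr.
by case: ifP => _; rewrite ?eqxx ?leq_b1.
Qed.

End Bob.

Local Open Scope ring_scope.

Lemma avg_half (R : realFieldType) (W Q : finType) (w : W -> R) (q : Q -> R)
  (w_ge0 : forall a, 0 <= w a) (w_sum : \sum_a w a = 1)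
  (q_ge0 : forall a, 0 <= q a) (q_sum : \sum_a q a = 1)
  (G0 G1 : W -> Q -> Q -> R)
  (HG : forall a u v, G0 a u v + G1 a v u <= 1) :
  exists v, \sum_a \sum_u w a * q u * G0 a u v <= 2^-1 \/
            \sum_a \sum_u w a * q u * G1 a u v <= 2^-1.
Proof.
set S := fun v => \sum_a \sum_u w a * q u * G0 a u v +
                  \sum_a \sum_u w a * q u * G1 a u v.
have Hsum : \sum_v q v * S v <= 1.
  have E : forall G : W -> Q -> Q -> R, \sum_v q v * (\sum_a \sum_u w a * q u * G a u v)
      = \sum_a \sum_u \sum_v w a * (q u * q v * G a u v).
    move=> G; under eq_bigr => v _ do rewrite big_distrr /=.
    rewrite exchange_big /=; apply: eq_bigr => a _.
    under eq_bigr => v _ do rewrite big_distrr /=.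
    rewrite exchange_big /=; apply: eq_bigr => u _; apply: eq_bigr => v _.
    ring.
  under eq_bigr => v _ do rewrite /S mulrDr.
  rewrite big_split /= !E.
  have E2 : \sum_a \sum_u \sum_v w a * (q u * q v * G1 a u v)
          = \sum_a \sum_u \sum_v w a * (q u * q v * G1 a v u).
    apply: eq_bigr => a _; rewrite exchange_big /=.
    apply: eq_bigr => u _; apply: eq_bigr => v _; ring.
  rewrite E2.
  have leaf : forall a u v, w a * (q u * q v * G0 a u v) + w a * (q u * q v * G1 a v u)
     <= w a * (q u * q v).
    move=> a u v.
    have h2 : 0 <= w a * (q u * q v) by apply: mulr_ge0 => //; exact: mulr_ge0.
    have -> : w a * (q u * q v * G0 a u v) + w a * (q u * q v * G1 a v u)
       = (w a * (q u * q v)) * (G0 a u v + G1 a v u) by ring.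
    by apply: le_trans (ler_wpM2l h2 (HG a u v)) _; rewrite mulr1.
  rewrite -big_split /=.
  apply: (@le_trans _ _ (\sum_a \sum_u \sum_v w a * (q u * q v))).
    apply: ler_sum => a _; rewrite -big_split /=; apply: ler_sum => u _.
    rewrite -big_split /=; apply: ler_sum => v _; exact: leaf.
  rewrite -w_sum le_eqVlt; apply/orP; left; apply/eqP.
  apply: eq_bigr => a _.
  transitivity (\sum_u (w a * q u) * \sum_v q v).
    apply: eq_bigr => u _; rewrite big_distrr; apply: eq_bigr => v _ /=; by rewrite mulrA.
  rewrite q_sum (eq_bigr (fun u => w a * q u)); last by move=> u _; rewrite mulr1.
  by rewrite -big_distrr /= q_sum mulr1.
have [v0 _] : exists v : Q, true.
  case: (pickP Q) => [v _|H]; first by exists v.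
  move: q_sum; rewrite big_pred0 //; move=> /eqP; rewrite eq_sym oner_eq0.
  by [].
case: (arg_minP S (P := xpredT) (i0 := v0) erefl) => vm _ Hmin.
exists vm.
have : S vm <= 1.
  apply: le_trans Hsum.
  rewrite -[S vm]mul1r -q_sum big_distrl /=; apply: ler_sum => v _.
  by apply: (ler_wpM2l (q_ge0 v)); apply: Hmin.
rewrite /S; set a := \sum_a _ _; set b := \sum_a _ _ => H.
case: (lerP a (2^-1)) => Ha; [by left|right]; lra.
Qed.

Lemma bob_case
  (R : realFieldType) (X Y S : eqType) (RA RB : finType)
  (pA : RA -> R) (pB : RB -> R)
  (pA_ge0 : forall r, 0 <= pA r) (pA_sum : \sum_(r : RA) pA r = 1)
  (pB_ge0 : forall r, 0 <= pB r) (pB_sum : \sum_(r : RB) pB r = 1)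
  (P : protocol X Y S RA RB) (x : X) (y0 y1 : Y) (hy : y0 != y1)
  (hk : (2 * cntB P (rounds P) <= rounds P)%N) :
  exists (x : X) (y : Y) (adv : adversary S),
    (forall rA rB, (4 * corruptions P adv x y rA rB <= (rounds P).+3)%N) /\
    \sum_(rA : RA) \sum_(rB : RB)
        pA rA * pB rB * (succeeds P adv x y rA rB)%:R <= 2^-1.
Proof.
set m := (cntB P (rounds P) %/ 2)%N.
have hm : m = (cntB P (rounds P) %/ 2)%N := erefl. clearbody m.
have HG : forall a u v,
   (succeeds P (adv0 P m y1 v) x y0 a u)%:R + (succeeds P (adv1 P m y0 u) x y1 a v)%:R <= 1 :> R.
  move=> a u v; rewrite /succeeds T0 T1 -natrD.
  have : ~~ ((outA P x a (Tg P x a y0 u y1 v m (rounds P)) == (x, y0)) &&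
             (outA P x a (Tg P x a y0 u y1 v m (rounds P)) == (x, y1))).
    apply/negP => /andP [/eqP -> /eqP []] E; by rewrite E eqxx in hy.
  rewrite lern1.
  by case: (_ == (x, y0)); case: (_ == (x, y1)); case: (_ == _); case: (_ == _).
have [v [H|H]] := @avg_half R RA RB pA pB pA_ge0 pA_sum pB_ge0 pB_sum
  (fun a u v => (succeeds P (adv0 P m y1 v) x y0 a u)%:R)
  (fun a u v => (succeeds P (adv1 P m y0 v) x y1 a u)%:R) HG.
- exists x, y0, (adv0 P m y1 v); split => // rA rB.
  have h1 := corr0 P x rA y0 rB y1 v m.
  have h2 := cnt_split P m (rounds P); have h3 := cnt_first P m (rounds P).
  lia.
- exists x, y1, (adv1 P m y0 v); split => // rA rB.
  have h1 := corr1 P x rA y0 v y1 rB m.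
  have h3 := cnt_first P m (rounds P).
  lia.
Qed.

Definition swapP (X Y : Type) (S : eqType) (RA RB : Type) (P : protocol X Y S RA RB)
  : protocol Y X S RB RA :=
  Protocol (rounds P) (fun i => ~~ speaker P i) (msgB P) (msgA P)
    (fun y r h => let p := outB P y r h in (p.2, p.1))
    (fun x r h => let p := outA P x r h in (p.2, p.1)).

Lemma sent_swap (X Y : Type) (S : eqType) (RA RB : Type) (P : protocol X Y S RA RB)
  x y rA rB i h : sent (swapP P) y x rB rA i h = sent P x y rA rB i h.
Proof. by rewrite /sent /=; case: (speaker P i). Qed.

Lemma tr_swap (X Y : Type) (S : eqType) (RA RB : Type) (P : protocol X Y S RA RB)
  adv x y rA rB i : transcript (swapP P) adv y x rB rA i = transcript P adv x y rA rB i.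
Proof. by elim: i => //= i ->; rewrite sent_swap. Qed.

Lemma corr_swap (X Y : Type) (S : eqType) (RA RB : Type) (P : protocol X Y S RA RB)
  adv x y rA rB : corruptions (swapP P) adv y x rB rA = corruptions P adv x y rA rB.
Proof. by apply: eq_bigr => i _; rewrite tr_swap sent_swap. Qed.

Lemma succ_swap (X Y : eqType) (S : eqType) (RA RB : Type) (P : protocol X Y S RA RB)
  adv x y rA rB : succeeds (swapP P) adv y x rB rA = succeeds P adv x y rA rB.
Proof.
rewrite /succeeds /= tr_swap.
case: (outA P x rA _) => a b; case: (outB P y rB _) => c d /=.
rewrite !xpair_eqE andbC; congr (_ && _); apply: andbC.
Qed.

Lemma cnt_swap (X Y : Type) (S : eqType) (RA RB : Type) (P : protocol X Y S RA RB) :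
  (cntB (swapP P) (rounds P) + cntB P (rounds P) = rounds P)%N.
Proof.
rewrite /cntB /= -big_split /=.
rewrite (eq_bigr (fun _ => 1%N)); first by rewrite sum1_card card_ord.
by move=> i _; case: (speaker P i).
Qed.

Theorem mainTheorem2
  (R : realFieldType) (X Y S : eqType) (RA RB : finType)
  (pA : RA -> R) (pB : RB -> R)
  (pA_ge0 : forall r, 0 <= pA r) (pA_sum : \sum_(r : RA) pA r = 1)
  (pB_ge0 : forall r, 0 <= pB r) (pB_sum : \sum_(r : RB) pB r = 1)
  (P : protocol X Y S RA RB)
  (hX : exists x0 x1 : X, x0 != x1) (hY : exists y0 y1 : Y, y0 != y1) :
  exists (x : X) (y : Y) (adv : adversary S),
    (forall rA rB, (4 * corruptions P adv x y rA rB <= (rounds P).+3)%N) /\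
    \sum_(rA : RA) \sum_(rB : RB)
        pA rA * pB rB * (succeeds P adv x y rA rB)%:R <= 2^-1.
Proof.
case: hX => x0 [x1 hx]; case: hY => y0 [y1 hy].
case: (leqP (2 * cntB P (rounds P)) (rounds P)) => hk.
  exact: (bob_case pA_ge0 pA_sum pB_ge0 pB_sum x0 hy hk).
have hk' : (2 * cntB (swapP P) (rounds (swapP P)) <= rounds (swapP P))%N.
  have := cnt_swap P; rewrite /=; lia.
have [y [x [adv [Hc Hs]]]] :=
  bob_case pB_ge0 pB_sum pA_ge0 pA_sum y0 hx hk'.
exists x, y, adv; split.
  by move=> rA rB; rewrite -corr_swap; exact: Hc rB rA.
apply: le_trans Hs; rewrite le_eqVlt; apply/orP; left; apply/eqP.
rewrite exchange_big /=; apply: eq_bigr => rB _; apply: eq_bigr => rA _.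
by rewrite succ_swap [pB rB * pA rA]mulrC.
Qed.
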